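(* Let $A,B,C$ be non-empty convex compact subsets of $\mathbb{R}$ (i.e. compact intervals). Then the metric sum is associative on them: $$(A\oplus B)\oplus C= A\oplus (B\oplus C)=A\oplus B\oplus C.$$
   Context: For non-empty compact $A,B\subseteq\mathbb{R}$ and $b\in\mathbb{R}$, let $D(b,A)=\min_{a\in A}|b-a|$ and $\Lambda_A(b)=\{a\in A: |b-a|=D(b,A)\}$. The set of metric pairs is $\Lambda(A,B)=\{(a,b)\in A\times B: a\in\Lambda_A(b)\text{ or } b\in\Lambda_B(a)\}$. For non-empty compact $A_0,\dots,A_N\subseteq\mathbb{R}$, the metric chains are $\mathrm{Ch}(A_0,\dots,A_N)=\{(a_0,\dots,a_N)\in A_0\times\cdots\times A_N: (a_j,a_{j+1})\in\Lambda(A_j,A_{j+1}),\ j=0,\dots,N-1\}$, and for $\lambda_0,\dots,\lambda_N\in\mathbb{R}$ the metric linear combination is $\bigoplus_{j=0}^N\lambda_jA_j=\{\sum_{j=0}^N\lambda_ja_j:(a_0,\dots,a_N)\in\mathrm{Ch}(A_0,\dots,A_N)\}$. In particular $A\oplus B=\{a+b:(a,b)\in\Lambda(A,B)\}$ and $A\oplus B\oplus C=\{a+b+c:(a,b,c)\in\mathrm{Ch}(A,B,C)\}$. *)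

(* Defs.v *)
From HB Require Import structures.
From mathcomp Require Import all_boot all_order all_algebra.
From mathcomp Require Import all_classical all_reals all_analysis.
Set Implicit Arguments. Unset Strict Implicit. Unset Printing Implicit Defensive.
Import Order.TTheory GRing.Theory Num.Theory.
Import numFieldNormedType.Exports.
Local Open Scope classical_set_scope.
Local Open Scope ring_scope.

Section MetricSum.
Variable R : realType.

Definition nearest (A : set R) (b : R) : set R :=
  [set a | A a /\ forall a', A a' -> `|b - a| <= `|b - a'|].

Definition metric_pair (A B : set R) (a b : R) : Prop :=
  A a /\ B b /\ (nearest A b a \/ nearest B a b).

Definition msum2 (A B : set R) : set R :=
  [set x | exists a b, metric_pair A B a b /\ x = a + b].

Definition msum3 (A B C : set R) : set R :=
  [set x | exists a b c, metric_pair A B a b /\ metric_pair B C b c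
                         /\ x = a + b + c].

End MetricSum.

(* Main.v *)
Require Import Defs.
From HB Require Import structures.
From mathcomp Require Import all_boot all_order all_algebra.
From mathcomp Require Import all_classical all_reals all_analysis.
From mathcomp Require Import lra.
Import Order.TTheory GRing.Theory Num.Theory Num.Def.
Import numFieldNormedType.Exports.
Local Open Scope classical_set_scope.
Local Open Scope ring_scope.

Section H.
Variable R : realType.

Definition I (x1 x2 : R) : set R := [set x | x1 <= x <= x2].
Definition clamp (x1 x2 t : R) : R := maxr x1 (minr x2 t).

Lemma clamp_cont (x1 x2 : R) : continuous (clamp x1 x2).
Proof.
apply: (@max_fun_continuous _ _ _ (fun=> x1) (fun t => minr x2 t)).
  exact: cst_continuous.
apply: (@min_fun_continuous _ _ _ (fun=> x2) id).
  exact: cst_continuous.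
exact: (fun x => @cvg_id _ _).
Qed.

Lemma clamp_spec (x1 x2 t : R) : x1 <= x2 ->
  (t <= x1 /\ clamp x1 x2 t = x1) \/ (x1 <= t /\ t <= x2 /\ clamp x1 x2 t = t)
  \/ (x2 <= t /\ clamp x1 x2 t = x2).
Proof.
move=> h; rewrite /clamp.
have /orP[h1|h1] := le_total t x1.
  left; split => //; rewrite min_r ?max_l //; exact: (le_trans h1 h).
have /orP[h2|h2] := le_total t x2.
  by right; left; rewrite min_r // max_r.
by right; right; rewrite min_l ?max_r.
Qed.

Lemma clampL (x1 x2 t : R) : x1 <= x2 -> t <= x1 -> clamp x1 x2 t = x1.
Proof. move=> h ht; case: (clamp_spec x1 x2 t h) => [[]|[[? [? ->]]|[? ->]]] //; lra. Qed.

Lemma clampU (x1 x2 t : R) : x1 <= x2 -> x2 <= t -> clamp x1 x2 t = x2.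
Proof. move=> h ht; case: (clamp_spec x1 x2 t h) => [[? ->]|[[? [? ->]]|[]]] //; lra. Qed.

Lemma clamp_in (x1 x2 t : R) : x1 <= x2 -> I x1 x2 (clamp x1 x2 t).
Proof.
move=> h; rewrite /I /=; apply/andP.
case: (clamp_spec x1 x2 t h) => [[? ->]|[[? [? ->]]|[? ->]]]; split => //; lra.
Qed.

Lemma near_ok (x1 x2 b a : R) : x1 <= a -> a <= x2 ->
  (b <= a /\ a = x1) \/ a = b \/ (a <= b /\ a = x2) -> nearest (I x1 x2) b a.
Proof.
move=> h1 h2 H; split; first by rewrite /I /= h1 h2.
move=> a' /andP[h1' h2'].
case: H => [[hb ha]|[->|[hb ha]]].
- rewrite (ler0_norm (x := b - a)); last lra.
  rewrite ler_normr; apply/orP; right; lra.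
- by rewrite subrr normr0.
- rewrite (ger0_norm (x := b - a)); last lra.
  rewrite ler_normr; apply/orP; left; lra.
Qed.

Lemma mp_clamp (x1 x2 y1 y2 t : R) : x1 <= x2 -> y1 <= y2 ->
  metric_pair (I x1 x2) (I y1 y2) (clamp x1 x2 t) (clamp y1 y2 t).
Proof.
move=> hx hy; split; first exact: clamp_in.
split; first exact: clamp_in.
have := clamp_in x1 x2 t hx; have := clamp_in y1 y2 t hy; rewrite /I /= => /andP[? ?] /andP[? ?].
have /orP[hab|hab] := le_total x1 y1; have /orP[hab2|hab2] := le_total x2 y2;
case: (clamp_spec x1 x2 t hx) => [[? ->]|[[? [? ->]]|[? ->]]];
case: (clamp_spec y1 y2 t hy) => [[? ->]|[[? [? ->]]|[? ->]]];
first [ by left; apply: near_ok; [lra|lra|left; split; lra]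
      | by left; apply: near_ok; [lra|lra|right; left; lra]
      | by left; apply: near_ok; [lra|lra|right; right; split; lra]
      | by right; apply: near_ok; [lra|lra|left; split; lra]
      | by right; apply: near_ok; [lra|lra|right; left; lra]
      | by right; apply: near_ok; [lra|lra|right; right; split; lra]
      ].
Qed.

Lemma ivt_hit (g : R -> R) (lo hi s : R) : continuous g -> lo <= hi ->
  g lo <= s -> s <= g hi -> exists t, g t = s.
Proof.
move=> hc hlh h1 h2.
have hgg : g lo <= g hi by exact: le_trans h1 h2.
have hw : {within `[lo, hi], continuous g} by apply: continuous_subspaceT.
have hm : minr (g lo) (g hi) <= s <= maxr (g lo) (g hi).
  by rewrite (min_l hgg) (max_r hgg) h1 h2.
have [c _ hcs] := @IVT R g lo hi s hlh hw hm.
by exists c.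
Qed.

Lemma mm (x1 y1 : R) : minr x1 y1 <= x1 /\ minr x1 y1 <= y1 /\ x1 <= maxr x1 y1 /\ y1 <= maxr x1 y1.
Proof. by rewrite !ge_min !le_max !lexx !orbT. Qed.

Lemma msum2_itv (x1 x2 y1 y2 : R) : x1 <= x2 -> y1 <= y2 ->
  msum2 (I x1 x2) (I y1 y2) = I (x1 + y1) (x2 + y2).
Proof.
move=> hx hy; apply/seteqP; split.
  move=> s [a [b [[Ha [Hb _]] ->]]]; move: Ha Hb; rewrite /I /=.
  by move=> /andP[? ?] /andP[? ?]; apply/andP; split; lra.
move=> s; rewrite /I /= => /andP[hs1 hs2].
have [m1 [m2 [m3 m4]]] := mm x1 y1.
have [n1 [n2 [n3 n4]]] := mm x2 y2.
case: (@ivt_hit (fun t => clamp x1 x2 t + clamp y1 y2 t)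
   (minr x1 y1) (maxr x2 y2) s) => [||||t ht].
- by move=> u; apply: continuousD; apply: clamp_cont.
- lra.
- rewrite clampL // ?clampL //; lra.
- rewrite clampU // ?clampU //; lra.
exists (clamp x1 x2 t), (clamp y1 y2 t); split => //.
exact: mp_clamp.
Qed.

Lemma msum3_itv (x1 x2 y1 y2 z1 z2 : R) : x1 <= x2 -> y1 <= y2 -> z1 <= z2 ->
  msum3 (I x1 x2) (I y1 y2) (I z1 z2) = I (x1 + y1 + z1) (x2 + y2 + z2).
Proof.
move=> hx hy hz; apply/seteqP; split.
  move=> s [a [b [c [[Ha [Hb _]] [[_ [Hc _]] ->]]]]]; move: Ha Hb Hc; rewrite /I /=.
  by move=> /andP[? ?] /andP[? ?] /andP[? ?]; apply/andP; split; lra.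
move=> s; rewrite /I /= => /andP[hs1 hs2].
have [m1 [m2 [m3 m4]]] := mm x1 (minr y1 z1).
have [m5 [m6 [m7 m8]]] := mm y1 z1.
have [n1 [n2 [n3 n4]]] := mm x2 (maxr y2 z2).
have [n5 [n6 [n7 n8]]] := mm y2 z2.
case: (@ivt_hit (fun t => clamp x1 x2 t + clamp y1 y2 t + clamp z1 z2 t)
   (minr x1 (minr y1 z1)) (maxr x2 (maxr y2 z2)) s) => [||||t ht].
- by move=> u; apply: cvgD; [apply: cvgD|]; apply: clamp_cont.
- lra.
- rewrite clampL // ?clampL // ?clampL //; lra.
- rewrite clampU // ?clampU // ?clampU //; lra.
exists (clamp x1 x2 t), (clamp y1 y2 t), (clamp z1 z2 t); split => //.
  exact: mp_clamp.
split => //; exact: mp_clamp.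
Qed.


Lemma itv_of (A : set R) : A !=set0 -> is_interval A -> compact A ->
  exists x1 x2, x1 <= x2 /\ A = I x1 x2.
Proof.
move=> A0 iA cA.
have hc : {within A, continuous (id : R -> R)}.
  by apply: continuous_subspaceT => u; exact: cvg_id.
have [m mA hm] := compact_EVT_min A0 cA hc.
have [M MA hM] := compact_EVT_max A0 cA hc.
exists m, M; split; first exact: hM mA.
apply/seteqP; split.
  move=> x Ax; rewrite /I /=; apply/andP; split.
    by apply: hm; exact: mem_set.
  by apply: hM; exact: mem_set.
move=> x /andP[h1 h2]; apply: (iA m M); [exact: set_mem | exact: set_mem |].
by rewrite h1 h2.
Qed.

End H.

Theorem proposition2p3 (R : realType) (A B C : set R) :
  A !=set0 -> B !=set0 -> C !=set0 ->
  is_interval A -> is_interval B -> is_interval C ->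
  compact A -> compact B -> compact C ->
  msum2 (msum2 A B) C = msum2 A (msum2 B C) /\
  msum2 A (msum2 B C) = msum3 A B C.
Proof.
move=> A0 B0 C0 iA iB iC cA cB cC.
have [a1 [a2 [ha ->]]] := @itv_of _ _ A0 iA cA.
have [b1 [b2 [hb ->]]] := @itv_of _ _ B0 iB cB.
have [c1 [c2 [hc ->]]] := @itv_of _ _ C0 iC cC.
have hab : a1 + b1 <= a2 + b2 by exact: lerD.
have hbc : b1 + c1 <= b2 + c2 by exact: lerD.
rewrite (@msum2_itv _ _ _ _ _ ha hb) (@msum2_itv _ _ _ _ _ hab hc) (@msum2_itv _ _ _ _ _ hb hc) (@msum2_itv _ _ _ _ _ ha hbc).
by rewrite (@msum3_itv _ _ _ _ _ _ _ ha hb hc) !addrA.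
Qed.
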